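(* Let $R$ be a finite chain ring, let $A\subseteq R$ be a well-conditioned set of size $n$, partitioned as $A=\bigcup_{i=1}^lA_i$ into nonempty blocks, and let $h_A(x)=\prod_{a\in A}(x-a)$. Let $$\mathcal F_A=\{f\in R[x]:\ \deg f<|A|,\ f \text{ is constant on } A_i \text{ for every } i\},$$ an $R$-algebra with the usual addition and multiplication modulo $h_A$. Then: (1) If $f\in\mathcal F_A$ is not a constant polynomial, then $\max_i|A_i|\le\deg f<|A|$. (2) $\mathcal F_A$ is a free $R$-module of rank $l$, with basis $f_1,\dots,f_l$ where $$f_i(x)=\sum_{a\in A_i}\prod_{b\in A\setminus\{a\}}\frac{x-b}{a-b},$$ which satisfy $f_i(A_j)=\delta_{i,j}$. (3) If $\{c_1,\dots,c_l\}\subseteq R$ is a well-conditioned set of $l$ distinct elements and $g$ is the unique polynomial of degree $<|A|$ with $g(A_i)=c_i$ for all $i$, then $1,g,g^2,\dots,g^{l-1}$ (powers computed in $\mathcal F_A$, i.e. modulo $h_A$) form a basis of $\mathcal F_A$ as an $R$-module.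
   Context: A finite chain ring is a finite commutative local ring whose ideals are totally ordered by inclusion; $N(R)$ is its unit group. A subset $T\subseteq N(R)$ is subtractive if $a-b\in N(R)$ for all distinct $a,b\in T$. A set $\{a_1,\dots,a_n\}\subseteq R$ is well-conditioned if either it is a subtractive subset of $N(R)$, or for some $i$ the set without $a_i$ is a subtractive subset of $N(R)$ and $a_i$ is a zero divisor (or $0$). For a block $A_i$ and $f$ constant on it, $f(A_i)$ denotes that constant value. *)

(* Defs.v *)
From HB Require Import structures.
From mathcomp Require Import all_boot all_order all_algebra.
Set Implicit Arguments. Unset Strict Implicit. Unset Printing Implicit Defensive.
Import Order.TTheory GRing.Theory.
Local Open Scope ring_scope.

Section ChainRing.
Variable R : finComUnitRingType.

Definition is_ideal (I : {set R}) : Prop :=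
  0 \in I /\ (forall x y, x \in I -> y \in I -> x + y \in I) /\
  (forall r x, x \in I -> r * x \in I).

Definition is_maximal_ideal (M : {set R}) : Prop :=
  is_ideal M /\ M != [set: R] /\
  forall I, is_ideal I -> M \subset I -> I = M \/ I = [set: R].

Definition local_ring : Prop :=
  exists M, is_maximal_ideal M /\ forall M', is_maximal_ideal M' -> M' = M.

(* finite chain ring: finite commutative local ring whose ideals are totally
   ordered by inclusion (finiteness and commutativity come from the type). *)
Definition chain_ring : Prop :=
  local_ring /\
  forall I J, is_ideal I -> is_ideal J -> (I \subset J) \/ (J \subset I).

Definition subtractive (T : {set R}) : Prop :=
  (forall a, a \in T -> a \is a GRing.unit) /\
  forall a b, a \in T -> b \in T -> a != b -> a - b \is a GRing.unit.

(* zero divisor, including 0 *)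
Definition zero_divisor (a : R) : Prop := exists b : R, b != 0 /\ a * b = 0.

Definition well_conditioned (A : {set R}) : Prop :=
  subtractive A \/
  exists a, a \in A /\ subtractive (A :\ a) /\ zero_divisor a.

Definition hA (A : {set R}) : {poly R} := \prod_(a in A) ('X - a%:P).

Definition in_FA (A : {set R}) (P : {set {set R}}) (f : {poly R}) : Prop :=
  (size f <= #|A|)%N /\
  forall B, B \in P -> forall x y, x \in B -> y \in B -> f.[x] = f.[y].

Definition fB (A B : {set R}) : {poly R} :=
  \sum_(a in B) \prod_(b in A :\ a) (('X - b%:P) * ((a - b)^-1)%:P).

End ChainRing.

(* Main.v *)
Require Import Defs.
From HB Require Import structures.
From mathcomp Require Import all_boot all_order all_algebra.
From Stdlib Require Import Classical.
From mathcomp Require Import zify.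
Import Order.TTheory GRing.Theory.
Local Open Scope ring_scope.

Section Aux.
Variable R : finComUnitRingType.

Definition good (S : {set R}) := forall a b, a \in S -> b \in S -> a != b ->
  (a - b) \is a GRing.unit.

Lemma good_uniq_roots (S : {set R}) : good S -> uniq_roots (enum S).
Proof.
move=> gS; have: uniq (enum S) := enum_uniq S.
have : forall x, x \in enum S -> x \in S by move=> x; rewrite mem_enum.
elim: (enum S) => //= x s IH sub /andP[xs us].
rewrite IH ?us // ?andbT; last by move=> y ys; apply: sub; rewrite inE ys orbT.
apply/allP => y ys; rewrite /diff_roots mulrC eqxx /=.
apply: gS; first by apply: sub; rewrite inE ys orbT.
  by apply: sub; rewrite inE eqxx.
by apply: contraNneq xs => <-.
Qed.

Lemma root_count (S : {set R}) (p : {poly R}) : good S -> p != 0 ->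
  (forall x, x \in S -> p.[x] = 0) -> (#|S| < size p)%N.
Proof.
move=> gS pn0 r; rewrite cardE; apply: max_ring_poly_roots => //.
  by apply/allP => x; rewrite mem_enum => /r /eqP.
exact: good_uniq_roots.
Qed.

Lemma zero_poly (S : {set R}) (p : {poly R}) : good S -> (size p <= #|S|)%N ->
  (forall x, x \in S -> p.[x] = 0) -> p = 0.
Proof.
move=> gS sp r; apply/eqP; apply: contraTT sp => pn0.
by rewrite -ltnNge; apply: root_count.
Qed.

Lemma size_prod2 (I : Type) (r : seq I) (P : pred I) (F : I -> {poly R}) :
  (forall i, size (F i) <= 2)%N ->
  (size (\prod_(i <- r | P i) F i)%R <= (count P r).+1)%N.
Proof.
move=> h; elim: r => [|i r IH]; first by rewrite big_nil size_poly1.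
rewrite big_cons /=; case: (P i) => //=.
apply: leq_trans; first exact: size_mul_leq.
have := h i; move: IH; set a := size _; set b := size _; lia.
Qed.

Lemma size_sum_le (I : Type) (r : seq I) (P : pred I) (F : I -> {poly R}) n :
  (forall i, P i -> size (F i) <= n)%N -> (size (\sum_(i <- r | P i) F i)%R <= n)%N.
Proof.
move=> h; apply: (big_ind (fun p : {poly R} => size p <= n)%N) => //.
  by rewrite size_poly0.
by move=> x y hx hy; apply: leq_trans (size_polyD _ _) _; rewrite geq_max hx hy.
Qed.

Definition lagb (S : {set R}) (a : R) : {poly R} :=
  \prod_(b in S :\ a) (('X - b%:P) * ((a - b)^-1)%:P).

Lemma size_lagb (S : {set R}) a : a \in S -> (size (lagb S a) <= #|S|)%N.
Proof.
move=> aS; apply: leq_trans; first apply: size_prod2.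
  move=> b; apply: leq_trans (size_mul_leq _ _) _.
  rewrite size_XsubC; case: (size _ ) (size_polyC_leq1 ((a - b)^-1)) => [|[|]]//.
rewrite (cardsD1 a S) aS add1n ltnS.
by rewrite -size_filter deprecated_filter_index_enum -cardE.
Qed.

Lemma horner_lagb (S : {set R}) a x : good S -> a \in S -> x \in S ->
  (lagb S a).[x] = (x == a)%:R.
Proof.
move=> gS aS xS; rewrite /lagb horner_prod.
case: eqP => [->|xa].
  apply: big1 => b; rewrite !inE => /andP[ba bS].
  by rewrite hornerM hornerXsubC hornerC divrr //; apply: gS => //; rewrite eq_sym.
rewrite (bigD1 x) /=; last by rewrite !inE xS andbT; apply/eqP.
by rewrite hornerM hornerXsubC subrr mul0r mul0r.
Qed.

End Aux.
Arguments good {R}.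
Arguments lagb {R}.
Arguments root_count {R}.
Arguments zero_poly {R}.
Arguments size_sum_le {R}.
Arguments size_lagb {R}.
Arguments horner_lagb {R}.
Arguments size_prod2 {R}.
Section Local.
Variable R : finComUnitRingType.

Lemma ideal_unit (I : {set R}) u : is_ideal I -> u \in I ->
  u \is a GRing.unit -> I = [set: R].
Proof.
move=> [_ [_ hm]] uI uU; apply/setP => r; rewrite inE.
by have := hm (r / u) u uI; rewrite divrK.
Qed.

Definition pid (x : R) : {set R} := [set y | [exists r, y == x * r]].

Lemma pid_ideal (x : R) : is_ideal (pid x).
Proof.
split; first by rewrite inE; apply/existsP; exists 0; rewrite mulr0.
split.
  move=> a b; rewrite !inE => /existsP[r /eqP->] /existsP[s /eqP->].
  by apply/existsP; exists (r + s); rewrite mulrDr.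
move=> r a; rewrite !inE => /existsP[s /eqP->].
by apply/existsP; exists (r * s); rewrite mulrCA.
Qed.

Lemma pid_proper (x : R) : x \isn't a GRing.unit -> pid x != [set: R].
Proof.
move=> xn; apply/eqP => h; have : (1 : R) \in pid x by rewrite h inE.
rewrite inE => /existsP[r /eqP e]; move/negP: xn; apply.
by apply/unitrPr; exists r.
Qed.

Lemma max_exists (I : {set R}) : is_ideal I -> I != [set: R] ->
  exists M, is_maximal_ideal M /\ I \subset M.
Proof.
move=> iI pI; have [k hk] : exists k, (#|R| - #|I| <= k)%N by exists (#|R| - #|I|)%N.
elim: k I iI pI hk => [|k IH] I iI pI hk.
  have : #|I| = #|[set: R]|.
    have := max_card I; move: hk; rewrite cardsT leqn0 subn_eq0 => h1 h2; apply/eqP; by rewrite eqn_leq h1 h2.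
  by move=> h; move: pI; rewrite eqEcard subsetT h leqnn.
case: (classic (exists J, is_ideal J /\ I \subset J /\ J != I /\ J != [set: R])).
  move=> [J [iJ [sIJ [nJI pJ]]]].
  have ltIJ : (#|I| < #|J|)%N.
    by apply: proper_card; rewrite properEneq sIJ andbT eq_sym.
  have hb : (#|R| - #|J| <= k)%N.
    by move: hk ltIJ; have := max_card J; lia.
  have [M [mM sJM]] := IH J iJ pJ hb.
  exists M; split=> //; exact: subset_trans sJM.
move=> nex; exists I; split=> //; split=> //; split=> // J iJ sIJ.
case: (eqVneq J I) => [->|nJI]; first by left.
case: (eqVneq J [set: R]) => [->|pJ]; first by right.
by case: nex; exists J.
Qed.

Hypothesis hloc : local_ring R.

Lemma nonunit_in_max (x : R) : x \isn't a GRing.unit ->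
  exists M, is_maximal_ideal M /\ x \in M /\ forall M' : {set R}, is_maximal_ideal M' -> M' = M.
Proof.
move=> xn; have [M [mM uM]] := hloc.
have [M' [mM' s]] := @max_exists (pid x) (pid_ideal x) (pid_proper x xn).
exists M; split=> //; split=> //.
rewrite -(uM _ mM'); apply: (subsetP s); rewrite inE.
by apply/existsP; exists 1; rewrite mulr1.
Qed.

Lemma nonunitD (x y : R) : x \isn't a GRing.unit -> y \isn't a GRing.unit ->
  x + y \isn't a GRing.unit.
Proof.
move=> xn yn; have [M [mM [xM uM]]] := nonunit_in_max x xn.
have [M2 [mM2 [yM2 uM2]]] := nonunit_in_max y yn.
have e := uM _ mM2; subst M2.
case: mM => [iM [pM _]]; apply/negP => u.
have := ideal_unit M (x + y) iM ((proj1 (proj2 iM)) x y xM yM2) u.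
by move/eqP: pM.
Qed.

Lemma zd_nonunit (a : R) : zero_divisor a -> a \isn't a GRing.unit.
Proof.
move=> [b [bn e]]; apply/negP => u; move/negP: bn; apply.
by rewrite -(mulKr u b) e mulr0.
Qed.

Lemma wc_good (S : {set R}) : well_conditioned S -> good S.
Proof.
case=> [[_ h]|[a0 [a0S [[hu hs] zd]]]]; first exact: h.
have a0n := zd_nonunit a0 zd.
have key : forall b, b \in S -> b != a0 -> (a0 - b) \is a GRing.unit.
  move=> b bS ba; have bu : b \is a GRing.unit by apply: hu; rewrite !inE ba.
  apply/negPn/negP => h; move: bu; apply/negP.
  have na : - a0 \isn't a GRing.unit by rewrite unitrN.
  by have := nonunitD (a0 - b) (- a0) h na; rewrite addrAC subrr add0r unitrN.
move=> a b aS bS ab.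
case: (eqVneq a a0) => [e|aa0].
  by subst a; apply: key => //; rewrite eq_sym.
case: (eqVneq b a0) => [e|ba0].
  by subst b; rewrite -opprB unitrN; apply: key.
by apply: hs; rewrite ?inE ?aa0 ?ba0.
Qed.

End Local.

Lemma good_sub {R : finComUnitRingType} (S T : {set R}) :
  T \subset S -> good S -> good T.
Proof.
move=> sTS gS a b aT bT; apply: gS; exact: (subsetP sTS).
Qed.

Theorem mainTheorem10 (R : finComUnitRingType) (A : {set R})
    (P : {set {set R}}) :
  chain_ring R -> well_conditioned A -> partition P A ->
  (* (1) *)
  (forall f : {poly R}, in_FA A P f -> (1 < size f)%N ->
     (forall B, B \in P -> (#|B| <= (size f).-1)%N) /\ ((size f).-1 < #|A|)%N)
  /\
  (* (2) *)
  ((forall B, B \in P -> in_FA A P (fB A B)) /\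
   (forall B C, B \in P -> C \in P -> forall x, x \in C ->
      (fB A B).[x] = (B == C)%:R) /\
   (forall f, in_FA A P f ->
      exists c : {set R} -> R, f = \sum_(B in P) c B *: fB A B) /\
   (forall c : {set R} -> R, \sum_(B in P) c B *: fB A B = 0 ->
      forall B, B \in P -> c B = 0))
  /\
  (* (3) *)
  (forall (c : {set R} -> R) (g : {poly R}),
     {in P &, injective c} -> well_conditioned (c @: P) ->
     (size g <= #|A|)%N ->
     (forall B, B \in P -> forall x, x \in B -> g.[x] = c B) ->
     let gpow := fun k : nat => Pdiv.Ring.rmodp (g ^+ k) (hA A) in
     (forall k, (k < #|P|)%N -> in_FA A P (gpow k)) /\
     (forall f, in_FA A P f ->
        exists d : 'I_#|P| -> R, f = \sum_(k < #|P|) d k *: gpow k) /\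
     (forall d : 'I_#|P| -> R, \sum_(k < #|P|) d k *: gpow k = 0 ->
        forall k, d k = 0)).
Proof.
move=> [hloc _] wcA /and3P[/eqP covP trivP nz0].
have gA : good A := @wc_good R hloc A wcA.
have sub : forall B, B \in P -> B \subset A.
  by move=> B BP; rewrite -covP; apply: bigcup_sup.
have inA : forall B x, B \in P -> x \in B -> x \in A.
  by move=> B x BP xB; apply: (subsetP (sub B BP)).
have blk : forall B C x, B \in P -> C \in P -> x \in B -> x \in C -> B = C.
  by move=> B C x BP CP xB xC; rewrite -(def_pblock trivP BP xB) (def_pblock trivP CP xC).
have memBC : forall B C x, B \in P -> C \in P -> x \in C -> (x \in B) = (B == C).
  move=> B C x BP CP xC; case: (eqVneq B C) => [->//|nBC].
  by apply/negP => xB; move/eqP: nBC; apply; exact: blk xB xC.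
pose repr (B : {set R}) := odflt 0 [pick x in B].
have reprB : forall B, B \in P -> repr B \in B.
  move=> B BP; have : B != set0 by apply: contraNneq nz0 => <-.
  case/set0Pn => x xB; rewrite /repr; case: pickP => //= h.
  by move: (h x); rewrite xB.
have cov : forall x, x \in A -> exists2 B, B \in P & x \in B.
  by move=> x; rewrite -covP => /bigcupP[B BP xB]; exists B.
have szF : forall B, B \in P -> (size (fB A B) <= #|A|)%N.
  move=> B BP; apply: size_sum_le => a aB; apply: size_lagb.
  exact: inA _ _ BP aB.
have evF : forall B x, B \in P -> x \in A -> (fB A B).[x] = (x \in B)%:R.
  move=> B x BP xA.
  have -> : fB A B = \sum_(a in B) lagb A a by [].
  rewrite horner_sum; case xB: (x \in B).
    rewrite (bigD1 x) //= horner_lagb // eqxx.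
    rewrite big1 ?addr0 // => a /andP[aB xa].
    have aA := inA _ _ BP aB.
    by rewrite horner_lagb // eq_sym (negbTE xa).
  rewrite big1 // => a aB; have aA := inA _ _ BP aB; rewrite horner_lagb //.
  by case: eqP aB xB => // -> ->.
have szsum : forall (I : finType) (Q : pred I) (w : I -> R) (F : I -> {poly R}),
    (forall i, Q i -> size (F i) <= #|A|)%N ->
    (size (\sum_(i | Q i) w i *: F i)%R <= #|A|)%N.
  move=> I Q w F h; apply: size_sum_le => i Qi.
  exact: leq_trans (size_scale_leq _ _) (h i Qi).
have eqA : forall p q : {poly R}, (size p <= #|A|)%N -> (size q <= #|A|)%N ->
    (forall x, x \in A -> p.[x] = q.[x]) -> p = q.
  move=> p q sp sq h; apply/eqP; rewrite -subr_eq0; apply/eqP.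
  apply: (@zero_poly _ A _ gA).
    by apply: leq_trans (size_polyD _ _) _; rewrite geq_max sp size_polyN sq.
  by move=> x xA; rewrite hornerD hornerN h // subrr.
split.
  move=> f [sf cf] s1; split; last by move: sf s1; case: (size f).
  move=> B BP; set q := f - (f.[repr B])%:P.
  have qn0 : q != 0.
    apply/eqP => q0; have fe : f = (f.[repr B])%:P.
      by apply/eqP; rewrite -subr_eq0 -/q q0.
    by move: s1; rewrite {1}fe => h1; have := leq_trans h1 (size_polyC_leq1 _).
  have sq : (size q <= size f)%N.
    apply: leq_trans (size_polyD _ _) _; rewrite geq_max leqnn size_polyN.
    by apply: leq_trans (size_polyC_leq1 _) _; apply: ltnW.
  have h := root_count _ _ (good_sub _ _ (sub B BP) gA) qn0.
  have : (#|B| < size f)%N.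
    apply: leq_trans (h _) sq => x xB.
    by rewrite /q hornerD hornerN hornerC (cf B BP x (repr B) xB (reprB B BP)) subrr.
  by move: s1; case: (size f).
split.
  split.
    move=> B BP; split; first exact: szF.
    move=> C CP x y xC yC; rewrite !evF ?(inA _ _ CP xC) ?(inA _ _ CP yC) //.
    by rewrite (memBC B C x) ?(memBC B C y).
  split.
    move=> B C BP CP x xC; rewrite evF ?(inA _ _ CP xC) //.
    by rewrite (memBC B C x).
  split.
    move=> f [sf cf]; exists (fun B => f.[repr B]).
    apply: eqA => //; first by apply: szsum.
    move=> x xA; have [C CP xC] := cov x xA.
    rewrite horner_sum (bigD1 C) //= hornerZ evF // xC mulr1.
    rewrite big1 ?addr0; first exact: cf C CP x _ xC (reprB C CP).
    move=> B /andP[BP nBC]; rewrite hornerZ evF // (memBC B C x) //.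
    by rewrite (negbTE nBC) mulr0.
  move=> c h B BP.
  have := congr1 (fun p => p.[repr B]) h; rewrite /= horner_sum hornerC.
  have rA := inA _ _ BP (reprB B BP).
  rewrite (bigD1 B) //= hornerZ evF // reprB // mulr1 big1 ?addr0 // => C /andP[CP nCB].
  by rewrite hornerZ evF // (memBC C B _ CP BP (reprB B BP)) (negbTE nCB) mulr0.
move=> c g cinj wcc sg gc gpow.
have gC : good (c @: P) := @wc_good R hloc _ wcc.
have hmon : hA A \is monic by apply: monic_prod_XsubC.
have hn0 : hA A != 0 by apply: monic_neq0.
have hsz : (size (hA A) <= #|A|.+1)%N.
  apply: leq_trans; first by apply: size_prod2 => a; rewrite size_XsubC.
  by rewrite ltnS -size_filter deprecated_filter_index_enum -cardE.
have h0 : forall x, x \in A -> (hA A).[x] = 0.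
  move=> x xA; rewrite /hA horner_prod (bigD1 x) //= hornerXsubC subrr mul0r //.
have gps : forall k, (size (gpow k) <= #|A|)%N.
  move=> k; rewrite -ltnS; apply: leq_trans hsz; by rewrite Pdiv.Ring.ltn_rmodp.
have gev : forall k B x, B \in P -> x \in B -> (gpow k).[x] = c B ^+ k.
  move=> k B x BP xB.
  have := congr1 (fun p => p.[x]) (Pdiv.RingMonic.rdivp_eq hmon (g ^+ k)).
  rewrite /= horner_exp (gc B BP x xB) hornerD hornerM h0 ?(inA _ _ BP xB) // mulr0 add0r.
  by move=> ->.
split.
  move=> k _; split; first exact: gps.
  by move=> B BP x y xB yB; rewrite (gev k B x) ?(gev k B y).
split.
  move=> f [sf cf].
  pose S := c @: P.
  pose v y := \sum_(B in P | c B == y) f.[repr B].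
  pose L := \sum_(a in S) v a *: lagb S a.
  have SP : (#|S| <= #|P|)%N := leq_imset_card c P.
  have sL : (size L <= #|P|)%N.
    apply: leq_trans SP; apply: size_sum_le => a aS.
    exact: leq_trans (size_scale_leq _ _) (size_lagb _ _ aS).
  exists (fun k => L`_k).
  apply: eqA => //.
    apply: size_sum_le => k _; exact: leq_trans (size_scale_leq _ _) (gps k).
  move=> x xA; have [C CP xC] := cov x xA.
  rewrite horner_sum.
  under eq_bigr => k _ do rewrite hornerZ (gev k C x CP xC).
  rewrite -(horner_coef_wide _ sL).
  have cS : c C \in S by apply: imset_f.
  rewrite horner_sum (bigD1 (c C)) //= hornerZ horner_lagb // eqxx mulr1.
  rewrite big1 ?addr0; last first.
    move=> a /andP[aS na]; rewrite hornerZ horner_lagb //.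
    by rewrite eq_sym (negbTE na) mulr0.
  rewrite /v (bigD1 C) /=; last by rewrite CP eqxx.
  rewrite big1 ?addr0; first exact: cf C CP x _ xC (reprB C CP).
  move=> B /andP[/andP[BP /eqP e] nBC]; case/eqP: nBC; exact: cinj.
move=> d hd.
pose D := \sum_(k < #|P|) d k *: ('X^k : {poly R}).
have DS : forall B, B \in P -> D.[c B] = 0.
  move=> B BP; have := congr1 (fun p => p.[repr B]) hd.
  rewrite /= horner_sum horner0 /D horner_sum => e.
  apply: etrans e; apply: eq_bigr => k _; by rewrite !hornerZ hornerXn (gev k B _ BP (reprB B BP)).
have D0 : D = 0.
  apply: (@zero_poly _ (c @: P) _ gC).
    rewrite card_in_imset //; apply: size_sum_le => k _.
    apply: leq_trans (size_scale_leq _ _) _; rewrite size_polyXn; exact: ltn_ord.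
  by move=> y /imsetP[B BP ->]; exact: DS.
move=> k; have := congr1 (fun p : {poly R} => p`_k) D0.
rewrite /= coef0 /D coef_sum (bigD1 k) //= coefZ coefXn eqxx mulr1 big1 ?addr0 //.
move=> j nj; rewrite coefZ coefXn.
by rewrite (_ : (k == j :> nat) = false) ?mulr0 //; apply/negbTE; rewrite eq_sym.
Qed.
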